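(* Let $G=(V,E)$ be a claw-free graph, let $L\subseteq V$ be such that $G[L]$ is an induced path or a hole, and let $\mathbf{j}\in V\setminus L$. Write $N=\Gamma_L(\mathbf{j})$. Then one of the following holds: (a.i) $N=\emptyset$; (a.ii) $|N|=2$ and the two vertices of $N$ are adjacent; (a.iii) $|N|=4$ and $G[N]$ is either a disjoint union of two edges or a path with three edges; (a.iv) $L$ is a hole of length four and $N=L$; (a.v) $L$ is an induced path with at least one edge and $N$ consists of the two endpoints of $L$; (b.i) $|N|=3$, $G[N]$ is a path with two edges, and each vertex of $N$ has two neighbours in $L$; (b.ii) $L$ is a hole of length five and $N=L$; (b.iii) $L$ is an induced path and $N$ consists of exactly one endpoint of $L$; (b.iv) $L$ is an induced path and $N=\{\mathbf{e},\mathbf{x},\mathbf{y}\}$ where $\mathbf{e}$ is an endpoint of $L$ and $\mathbf{x},\mathbf{y}$ are adjacent vertices of $L$.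
   Context: A hole is an induced cycle of length at least 4. An induced path is a vertex set $\{\mathbf{j}_0,\dots,\mathbf{j}_\ell\}$ whose induced edges are exactly $\{\mathbf{j}_i,\mathbf{j}_{i+1}\}$, $0\le i<\ell$; its endpoints are $\mathbf{j}_0,\mathbf{j}_\ell$. The claw is $K_{1,3}$; claw-free means no four vertices induce a claw. $\Gamma_L(\mathbf{j})=\Gamma(\mathbf{j})\cap L$ is the set of neighbours of $\mathbf{j}$ in $L$. *)

(* Defs.v *)
(* A simple graph is a symmetric irreflexive relation e on a finType T. *)
From mathcomp Require Import all_boot.
Set Implicit Arguments. Unset Strict Implicit. Unset Printing Implicit Defensive.

Definition claw_free (T : finType) (e : rel T) : Prop :=
  ~ exists a b c d : T,
      [&& e a b, e a c, e a d, b != c, b != d, c != d,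
          ~~ e b c, ~~ e b d & ~~ e c d].

Definition induced_path (T : finType) (e : rel T) (p : seq T) : Prop :=
  0 < size p /\ uniq p /\
  forall (x0 : T) (i k : nat), i < size p -> k < size p ->
    e (nth x0 p i) (nth x0 p k) = (i == k.+1) || (k == i.+1).

Definition hole (T : finType) (e : rel T) (p : seq T) : Prop :=
  4 <= size p /\ uniq p /\
  forall (x0 : T) (i k : nat), i < size p -> k < size p ->
    e (nth x0 p i) (nth x0 p k) =
      (i == k.+1 %% size p) || (k == i.+1 %% size p).

Definition nbhd_in (T : finType) (e : rel T) (L : {set T}) (j : T) : {set T} :=
  [set y in L | e j y].

Definition induces_path_edges (T : finType) (e : rel T) (N : {set T}) (k : nat) : Prop :=
  exists q : seq T, size q = k.+1 /\ induced_path e q /\ N = [set x in q].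

Definition induces_2K2 (T : finType) (e : rel T) (N : {set T}) : Prop :=
  exists a b c d : T, N = [set a; b; c; d] /\ #|N| = 4 /\
    forall x y, x \in N -> y \in N ->
      e x y = ([set x; y] == [set a; b]) || ([set x; y] == [set c; d]).

(* Main.v *)
Require Import Defs.
From mathcomp Require Import all_boot.
From mathcomp Require Import zify.
Set Implicit Arguments. Unset Strict Implicit. Unset Printing Implicit Defensive.

Definition Tcond (n : nat) (S : nat -> bool) := forall i k l, i < k -> k < l -> l < n ->
  S i -> S k -> S l -> k = i.+1 \/ l = k.+1.
Definition Icond (n : nat) (S : nat -> bool) := forall i, 0 < i -> i.+1 < n -> S i -> S i.-1 \/ S i.+1.

Definition classif n (S : nat -> bool) :=
  (forall i, i < n -> ~~ S i)
  \/ (exists a, a < n /\ (a = 0 \/ a.+1 = n) /\ forall i, i < n -> (S i <-> i = a))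
  \/ (exists a, a.+1 < n /\ forall i, i < n -> (S i <-> i = a \/ i = a.+1))
  \/ (exists a, a.+2 < n /\ forall i, i < n -> (S i <-> i = a \/ i = a.+1 \/ i = a.+2))
  \/ (exists a, a.+3 < n /\ forall i, i < n -> (S i <-> i = a \/ i = a.+1 \/ i = a.+2 \/ i = a.+3))
  \/ (exists a c, a.+2 < c /\ c.+1 < n /\ forall i, i < n -> (S i <-> i = a \/ i = a.+1 \/ i = c \/ i = c.+1))
  \/ (2 < n /\ forall i, i < n -> (S i <-> i = 0 \/ i = n.-1))
  \/ (exists a, a.+3 < n /\ forall i, i < n -> (S i <-> i = a \/ i = a.+1 \/ i = n.-1))
  \/ (exists c, 1 < c /\ c.+1 < n /\ forall i, i < n -> (S i <-> i = 0 \/ i = c \/ i = c.+1)).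

Lemma core n S : Tcond n S -> Icond n S -> classif n S.
Proof.
move=> HT HI.
case: (boolP [exists i : 'I_n, S i]) => [/existsP ex | /existsPn nex]; last first.
  by left => i lt; exact: (nex (Ordinal lt)).
have exP : exists i, (i < n) && S i by case: ex => i Si; exists i; rewrite ltn_ord.
case: (ex_minnP exP) => a /andP[an Sa] amin.
have ubP : forall i, (i < n) && S i -> i <= n by move=> i /andP[? _]; lia.
case: (ex_maxnP exP ubP) => b /andP[bn Sb] bmax.
have range : forall i, i < n -> S i -> a <= i <= b.
  move=> i lt Si; have h : (i < n) && S i by rewrite lt Si.
  by rewrite (amin i h) (bmax i h).
have ab : a <= b by have := range b bn Sb; lia.
case: (ltngtP b a) => [|lt_ab|eab]; first lia.
- case: (ltngtP b a.+1) => [|lt2|eab1]; first lia.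
  +
    have mid : forall k, a < k -> k < b -> S k -> k = a.+1 \/ k = b.-1.
      move=> k h1 h2 Sk; have := HT a k b h1 h2 bn Sa Sk Sb; lia.
    have char : forall i, i < n -> (S i <-> i = a \/ i = b \/ (i = a.+1 /\ S a.+1) \/ (i = b.-1 /\ S b.-1)).
      move=> i lt; split => [Si|].
        have rg := range i lt Si.
        case: (eqVneq i a) => [->|nia]; first by left.
        case: (eqVneq i b) => [->|nib]; first by right; left.
        have := mid i ltac:(lia) ltac:(lia) Si; case=> ei; subst i.
          by right; right; left.
        by right; right; right.
      case=> [->//|[->//|[[-> //]|[-> //]]]].
    have HIa : S a.+1 = false -> a = 0.
      move=> Su; case: (posnP a) => // a0.
      have [|] := HI a a0 ltac:(lia) Sa.
        by move=> S1; have := range a.-1 ltac:(lia) S1; lia.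
      by rewrite Su.
    have HIb : S b.-1 = false -> b.+1 = n.
      move=> Sv; case: (ltngtP b.+1 n) => // [lt|]; last lia.
      have [|] := HI b ltac:(lia) lt Sb.
        by rewrite Sv.
      by move=> S1; have := range _ lt S1; lia.
    case Su : (S a.+1); case Sv : (S b.-1).
    * case: (ltngtP b a.+3) => [lt3|gt3|e3].
      -- do 3 right; left; exists a; split; first lia.
         by move=> i lt; have := char i lt; rewrite Su Sv; lia.
      -- do 5 right; left; exists a, b.-1; split; first lia; split; first lia.
         by move=> i lt; have := char i lt; rewrite Su Sv; lia.
      -- do 4 right; left; exists a; split; first lia.
         by move=> i lt; have := char i lt; rewrite Su Sv; lia.
    * have e1 := HIb Sv.
      have : b <> a.+2 by move=> e2; move: Su Sv; rewrite e2 /=; move=> ->.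
      move=> ne2.
      do 7 right; left; exists a; split; first lia.
      by move=> i lt; have := char i lt; rewrite Su Sv; lia.
    * have e0 := HIa Su.
      have : b <> a.+2 by move=> e2; move: Su Sv; rewrite e2 /=; move=> ->.
      move=> ne2.
      do 8 right; exists b.-1; split; first lia; split; first lia.
      by move=> i lt; have := char i lt; rewrite Su Sv; lia.
    * have e0 := HIa Su; have e1 := HIb Sv.
      do 6 right; left; split; first lia.
      by move=> i lt; have := char i lt; rewrite Su Sv; lia.
  + do 2 right; left; exists a; split; first lia.
    move=> i lt; split => [Si|]; first by have := range i lt Si; lia.
    by case=> ->; rewrite -?eab1.
- right; left; exists a; split => //; split.
    case: (posnP a) => [|a0]; first by left.
    case: (ltngtP a.+1 n) => [lt||]; [|lia|by right].
    have [|] := HI a a0 lt Sa.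
      by move=> S1; have := range a.-1 ltac:(lia) S1; lia.
    by move=> S1; have := range _ lt S1; lia.
  move=> i lt; split => [Si|->//]; have := range i lt Si; lia.
Qed.

Definition finj (T : Type) (f : nat -> T) n := forall i k, i < n -> k < n -> f i = f k -> i = k.
Definition padj (T : Type) (e : rel T) f n :=
  forall i k, i < n -> k < n -> e (f i) (f k) = (i == k.+1) || (k == i.+1).
Definition imgc (T : finType) (f : nat -> T) n (S : nat -> bool) (N : {set T}) :=
  forall x, x \in N <-> exists i, i < n /\ S i /\ x = f i.

Lemma claw_contra (T : finType) (e : rel T) (a b c d : T) : claw_free e ->
  e a b -> e a c -> e a d -> b != c -> b != d -> c != d ->
  ~~ e b c -> ~~ e b d -> ~~ e c d -> False.
Proof.
move=> H h1 h2 h3 h4 h5 h6 h7 h8 h9; apply: H; exists a, b, c, d.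
by rewrite h1 h2 h3 h4 h5 h6 h7 h8 h9.
Qed.

Lemma feq (T : eqType) (f : nat -> T) n i k : finj f n -> i < n -> k < n ->
  (f i == f k) = (i == k).
Proof. by move=> H hi hk; apply/eqP/eqP => [/H|->]; auto. Qed.

Lemma Nset (T : finType) (f : nat -> T) n S N (l : seq nat) : imgc f n S N ->
  (forall i, i < n -> (S i <-> i \in l)) -> all (fun i => i < n) l ->
  N = [set x in map f l].
Proof.
move=> Hc Hl Ha; apply/setP => x; rewrite inE; apply/idP/idP.
- by move/Hc => [i [lt [Si ->]]]; apply/map_f; apply/Hl.
- case/mapP => i il ->; apply/Hc; exists i.
  have lt : i < n := allP Ha i il.
  by split=> //; split=> //; apply/Hl.
Qed.

Lemma Ncard (T : finType) (f : nat -> T) n (l : seq nat) : finj f n ->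
  all (fun i => i < n) l -> uniq l -> #|[set x in map f l]| = size l.
Proof.
move=> Hf Ha Hu; rewrite cardsE.
have /card_uniqP -> : uniq (map f l).
  rewrite map_inj_in_uniq // => i k hi hk; apply: Hf; [exact: allP Ha i hi| exact: allP Ha k hk].
by rewrite size_map.
Qed.

Lemma ipath (T : finType) (e : rel T) (f : nat -> T) n a m : finj f n -> padj e f n ->
  0 < m -> a + m <= n -> induced_path e (map f (iota a m)).
Proof.
move=> Hf Hp m0 am; split; first by rewrite size_map size_iota.
split.
  rewrite map_inj_in_uniq ?iota_uniq // => i k; rewrite !mem_iota => hi hk; apply: Hf; lia.
move=> x0 i k; rewrite size_map size_iota => hi hk.
rewrite !(nth_map 0) ?size_iota // !nth_iota // Hp; lia.
Qed.

Lemma set1_seq (T : finType) (a : T) : [set x in [:: a]] = [set a].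
Proof. by apply/setP => x; rewrite !inE. Qed.
Lemma set2_seq (T : finType) (a b : T) : [set x in [:: a; b]] = [set a; b].
Proof. by apply/setP => x; rewrite !inE. Qed.
Lemma set3_seq (T : finType) (a b c : T) : [set x in [:: a; b; c]] = [set a; b; c].
Proof. by apply/setP => x; rewrite !inE !orbA. Qed.
Lemma set4_seq (T : finType) (a b c d : T) : [set x in [:: a; b; c; d]] = [set a; b; c; d].
Proof. by apply/setP => x; rewrite !inE !orbA. Qed.

Lemma set2_eq (T : finType) (x y z w : T) : z != w ->
  ([set x; y] == [set z; w]) = ((x == z) && (y == w)) || ((x == w) && (y == z)).
Proof.
move=> zw.
case: (boolP (((x == z) && (y == w)) || ((x == w) && (y == z)))) => H.
  apply/eqP; case/orP: H => /andP[/eqP -> /eqP ->] //; exact: setUC.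
apply/negbTE/eqP => E.
have hz : (z == x) || (z == y) by rewrite -in_set2 E set21.
have hw : (w == x) || (w == y) by rewrite -in_set2 E set22.
have hx : (x == z) || (x == w) by rewrite -in_set2 -E set21.
have hy : (y == z) || (y == w) by rewrite -in_set2 -E set22.
move: H zw; case/orP: hx => /eqP ?; subst x.
- case/orP: hw => /eqP ?; subst; first by rewrite eqxx.
  by rewrite !eqxx.
- case/orP: hz => /eqP ?; subst; first by rewrite eqxx.
  by rewrite !eqxx orbT.
Qed.

Lemma imgc_nbhd (T : finType) (e : rel T) (f : nat -> T) n (L : {set T}) y :
  (forall x, x \in L <-> exists i, i < n /\ x = f i) ->
  imgc f n (fun i => e y (f i)) (nbhd_in e L y).
Proof.
move=> HL x; rewrite inE; split.
  by case/andP => /HL [i [lt ->]] ey; exists i.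
by move=> [i [lt [ey ->]]]; rewrite ey andbT; apply/HL; exists i.
Qed.

Lemma deg2 (T : finType) (e : rel T) (f : nat -> T) n (L : {set T}) y k1 k2 :
  (forall x, x \in L <-> exists i, i < n /\ x = f i) -> finj f n ->
  k1 < n -> k2 < n -> k1 != k2 ->
  (forall i, i < n -> (e y (f i) <-> i \in [:: k1; k2])) ->
  #|nbhd_in e L y| = 2.
Proof.
move=> HL Hf h1 h2 h12 Hi.
rewrite (Nset (imgc_nbhd e y HL) Hi); last by rewrite /= h1 h2.
by rewrite (Ncard (n:=n)) //= ?h1 ?h2 // inE h12.
Qed.

Lemma Tclaw (T : finType) (e : rel T) f n j : claw_free e -> finj f n -> padj e f n ->
  Tcond n (fun i => e j (f i)).
Proof.
move=> Hc Hf Hp i k l hik hkl hl Si Sk Sl.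
case: (eqVneq k i.+1) => [->|nk]; first by left.
case: (eqVneq l k.+1) => [->|nl]; first by right.
exfalso; apply: (claw_contra Hc Si Sk Sl); rewrite ?(feq Hf) ?Hp; lia.
Qed.

Lemma Iclaw (T : finType) (e : rel T) f n j : claw_free e -> symmetric e -> finj f n -> padj e f n ->
  (forall i, i < n -> f i != j) -> Icond n (fun i => e j (f i)).
Proof.
move=> Hc Hs Hf Hp Hj i i0 hi Si.
case Sa: (e j (f i.-1)); first by left.
case Sb: (e j (f i.+1)); first by right.
exfalso; apply: (claw_contra (a := f i) (b := j) (c := f i.-1) (d := f i.+1) Hc).
- by rewrite Hs.
- rewrite Hp; lia.
- rewrite Hp; lia.
- rewrite eq_sym Hj //; lia.
- rewrite eq_sym Hj //; lia.
- rewrite (feq Hf); lia.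
- by rewrite Sa.
- by rewrite Sb.
- rewrite Hp; lia.
Qed.

Lemma NSC (T : finType) (f : nat -> T) n S N (l : seq nat) : imgc f n S N -> finj f n ->
  all (fun i => i < n) l -> uniq l -> (forall i, i < n -> (S i <-> i \in l)) ->
  N = [set x in map f l] /\ #|N| = size l.
Proof.
move=> Hc Hf Ha Hu Hl; have NE := Nset Hc Hl Ha; split => //.
by rewrite NE (Ncard (n := n)).
Qed.

Ltac sl := rewrite /= ?inE; lia.

Lemma cC0 (T : finType) (f : nat -> T) n S N : imgc f n S N ->
  (forall i, i < n -> ~~ S i) -> N = set0.
Proof.
move=> Hc Hn; apply/setP => x; rewrite in_set0; apply/negbTE/negP.
by move/Hc => [i [lt [Si _]]]; move: (Hn i lt); rewrite Si.
Qed.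

Lemma cC2 (T : finType) (e : rel T) (f : nat -> T) n S N a : imgc f n S N -> finj f n ->
  padj e f n -> a.+1 < n -> (forall i, i < n -> (S i <-> i = a \/ i = a.+1)) ->
  #|N| = 2 /\ exists x y, N = [set x; y] /\ e x y.
Proof.
move=> Hc Hf Hp an Ha.
have [NE NC] := NSC (l := [:: a; a.+1]) Hc Hf ltac:(sl) ltac:(sl)
   ltac:(move=> i hi; rewrite !inE; have := Ha i hi; lia).
split=> //; exists (f a), (f a.+1); rewrite NE /= set2_seq; split=> //.
rewrite Hp; lia.
Qed.

Lemma cC3 (T : finType) (e : rel T) (f : nat -> T) n S N a : imgc f n S N -> finj f n ->
  padj e f n -> a.+2 < n -> (forall i, i < n -> (S i <-> i = a \/ i = a.+1 \/ i = a.+2)) ->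
  #|N| = 3 /\ induces_path_edges e N 2.
Proof.
move=> Hc Hf Hp an Ha.
have [NE NC] := NSC (l := [:: a; a.+1; a.+2]) Hc Hf ltac:(sl) ltac:(sl)
   ltac:(move=> i hi; rewrite !inE; have := Ha i hi; lia).
split=> //; exists (map f (iota a 3)); split; first by rewrite size_map size_iota.
split; last by rewrite NE.
apply: (ipath (n := n)) => //; lia.
Qed.

Lemma cC4 (T : finType) (e : rel T) (f : nat -> T) n S N a : imgc f n S N -> finj f n ->
  padj e f n -> a.+3 < n -> (forall i, i < n -> (S i <-> i = a \/ i = a.+1 \/ i = a.+2 \/ i = a.+3)) ->
  #|N| = 4 /\ induces_path_edges e N 3.
Proof.
move=> Hc Hf Hp an Ha.
have [NE NC] := NSC (l := [:: a; a.+1; a.+2; a.+3]) Hc Hf ltac:(sl) ltac:(sl)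
   ltac:(move=> i hi; rewrite !inE; have := Ha i hi; lia).
split=> //; exists (map f (iota a 4)); split; first by rewrite size_map size_iota.
split; last by rewrite NE.
apply: (ipath (n := n)) => //; lia.
Qed.

Lemma cC5 (T : finType) (e : rel T) (f : nat -> T) n S N a c : imgc f n S N -> finj f n ->
  padj e f n -> a.+2 < c -> c.+1 < n ->
  (forall i, i < n -> (S i <-> i = a \/ i = a.+1 \/ i = c \/ i = c.+1)) ->
  #|N| = 4 /\ induces_2K2 e N.
Proof.
move=> Hc Hf Hp ac cn Ha.
have [NE NC] := NSC (l := [:: a; a.+1; c; c.+1]) Hc Hf ltac:(sl) ltac:(sl)
   ltac:(move=> i hi; rewrite !inE; have := Ha i hi; lia).
split=> //; exists (f a), (f a.+1), (f c), (f c.+1).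
split; first by rewrite NE /= set4_seq.
split=> // x y /Hc [i [hi [Si ->]]] /Hc [k [hk [Sk ->]]].
have := (Ha i hi).1 Si; have := (Ha k hk).1 Sk => h1 h2.
have d1 : f a != f a.+1 by rewrite (feq Hf); lia.
have d2 : f c != f c.+1 by rewrite (feq Hf); lia.
rewrite Hp // (set2_eq _ _ d1) (set2_eq _ _ d2) !(feq Hf); lia.
Qed.

Definition Concl (T : finType) (e : rel T) (p : seq T) (j : T) :=
  let L := [set x in p] in
  let N := nbhd_in e L j in
  N = set0
  \/ (#|N| = 2 /\ exists a b, N = [set a; b] /\ e a b)
  \/ (#|N| = 4 /\ (induces_2K2 e N \/ induces_path_edges e N 3))
  \/ (hole e p /\ size p = 4 /\ N = L)
  \/ (induced_path e p /\ 2 <= size p /\ N = [set head j p; last j p])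
  \/ (#|N| = 3 /\ induces_path_edges e N 2 /\
                    forall y, y \in N -> #|nbhd_in e L y| = 2)
  \/ (hole e p /\ size p = 5 /\ N = L)
  \/ (induced_path e p /\ (N = [set head j p] \/ N = [set last j p]))
  \/ (induced_path e p /\ exists ep x y,
                    (ep = head j p \/ ep = last j p) /\ x \in L /\ y \in L /\ e x y /\
                    #|N| = 3 /\ N = [set ep; x; y]).

Lemma basics (T : finType) (p : seq T) (j : T) : uniq p -> j \notin p ->
  finj (nth j p) (size p) /\ (forall i, i < size p -> nth j p i != j) /\
  (forall x, x \in [set x in p] <-> exists i, i < size p /\ x = nth j p i).
Proof.
move=> hu jp; split.
  by move=> i k hi hk /eqP; rewrite nth_uniq // => /eqP.
split.
  by move=> i hi; apply/eqP => E; move: jp; rewrite -E mem_nth.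
move=> x; rewrite inE; split.
  by move=> xp; exists (index x p); rewrite index_mem nth_index.
by move=> [i [lt ->]]; apply: mem_nth.
Qed.

Lemma path_case (T : finType) (e : rel T) (p : seq T) (j : T) :
  symmetric e -> irreflexive e -> claw_free e -> induced_path e p -> j \notin p -> Concl e p j.
Proof.
move=> Hs Hirr Hc HP jp; have [n0 [hu Hadj]] := HP.
have [Hf [Hj HL]] := basics hu jp.
rewrite /Concl; cbv zeta.
set n := size p in n0 Hadj Hf Hj HL *.
set f := nth j p in Hadj Hf Hj HL *.
set L := [set x in p] in HL *.
have Hp : padj e f n by move=> i k hi hk; exact: Hadj.
have HN := imgc_nbhd e j HL.
set N := nbhd_in e L j in HN *.
have hd : head j p = f 0 by rewrite /f; case: (p) n0.
have lst : last j p = f n.-1 by rewrite /f /n nth_last.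
rewrite hd lst.
have degP : forall k, 0 < k -> k.+1 < n -> #|nbhd_in e L (f k)| = 2.
  move=> k k0 kn; apply: (deg2 (k1 := k.-1) (k2 := k.+1) HL Hf); try lia.
  by move=> i hi; rewrite Hp ?inE; lia.
have inL : forall i, i < n -> f i \in L by move=> i hi; apply/HL; exists i.
case: (core (Tclaw (j := j) Hc Hf Hp) (Iclaw Hc Hs Hf Hp Hj)).
  by move=> Hn; left; exact: cC0 HN Hn.
case.
  move=> [a [an [a01 Ha]]].
  have [NE NC] := NSC (l := [:: a]) HN Hf ltac:(sl) ltac:(sl)
     ltac:(move=> i hi; rewrite !inE; have := Ha i hi; lia).
  do 7 right; left; split => //; rewrite NE /= set1_seq.
  case: a01 => [->|ea]; [by left | right; congr [set f _]; lia].
case.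
  by move=> [a [an Ha]]; right; left; exact: cC2 HN Hf Hp an Ha.
case.
  move=> [a [an Ha]].
  case: (boolP ((0 < a) && (a.+3 < n))) => [/andP[a0 a3] | hb].
    do 5 right; left.
    have [N3 NP] := cC3 HN Hf Hp an Ha.
    split=> //; split=> // y /HN [k [hk [Sk ->]]]; apply: degP;
      have := (Ha k hk).1 Sk; lia.
  do 8 right; split=> //.
  case: (posnP a) => [a0|a0].
    subst a.
    have [NE NC] := NSC (l := [:: 0; 1; 2]) HN Hf ltac:(sl) ltac:(sl)
       ltac:(move=> i hi; rewrite !inE; have := Ha i hi; lia).
    exists (f 0), (f 1), (f 2); split; first by left.
    split; first by apply: inL; lia.
    split; first by apply: inL; lia.
    split; first by rewrite Hp; lia.
    by split; [exact: NC | rewrite NE /= set3_seq].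
  have [NE NC] := NSC (l := [:: a.+2; a; a.+1]) HN Hf ltac:(sl) ltac:(sl)
     ltac:(move=> i hi; rewrite !inE; have := Ha i hi; lia).
  exists (f a.+2), (f a), (f a.+1); split; first by right; congr f; lia.
  split; first by apply: inL; lia.
  split; first by apply: inL; lia.
  split; first by rewrite Hp; lia.
  by split; [exact: NC | rewrite NE /= set3_seq].
case.
  move=> [a [an Ha]]; have [N4 NP] := cC4 HN Hf Hp an Ha.
  by do 2 right; left; split => //; right.
case.
  move=> [a [c [ac [cn Ha]]]]; have [N4 NP] := cC5 HN Hf Hp ac cn Ha.
  by do 2 right; left; split => //; left.
case.
  move=> [n2 Ha]; do 4 right; left; split => //; split; first lia.
  have [NE NC] := NSC (l := [:: 0; n.-1]) HN Hf ltac:(sl) ltac:(sl)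
     ltac:(move=> i hi; rewrite !inE; have := Ha i hi; lia).
  by rewrite NE /= set2_seq.
case.
  move=> [a [an Ha]]; do 8 right; split=> //.
  have [NE NC] := NSC (l := [:: n.-1; a; a.+1]) HN Hf ltac:(sl) ltac:(sl)
     ltac:(move=> i hi; rewrite !inE; have := Ha i hi; lia).
  exists (f n.-1), (f a), (f a.+1); split; first by right.
  split; first by apply: inL; lia.
  split; first by apply: inL; lia.
  split; first by rewrite Hp; lia.
  by split; [exact: NC | rewrite NE /= set3_seq].
move=> [c [c1 [cn Ha]]]; do 8 right; split=> //.
have [NE NC] := NSC (l := [:: 0; c; c.+1]) HN Hf ltac:(sl) ltac:(sl)
   ltac:(move=> i hi; rewrite !inE; have := Ha i hi; lia).
exists (f 0), (f c), (f c.+1); split; first by left.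
split; first by apply: inL; lia.
split; first by apply: inL; lia.
split; first by rewrite Hp; lia.
by split; [exact: NC | rewrite NE /= set3_seq].
Qed.

Lemma hole_case (T : finType) (e : rel T) (p : seq T) (j : T) :
  symmetric e -> irreflexive e -> claw_free e -> hole e p -> j \notin p -> Concl e p j.
Proof.
move=> Hs Hirr Hc HH jp; have [h4 [hu Hh]] := HH.
have [Hf [Hj HL]] := basics hu jp.
rewrite /Concl; cbv zeta.
set n := size p in h4 Hh Hf Hj HL *.
set f := nth j p in Hh Hf Hj HL *.
set L := [set x in p] in HL *.
have Ha : forall i k, i < n -> k < n -> e (f i) (f k) =
    [|| (i == k.+1), (k == i.+1), (i == 0) && (k == n.-1) | (k == 0) && (i == n.-1)].
  move=> i k hi hk; rewrite /f Hh //.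
  have m1 : forall t, t < n -> t.+1 %% n = if t.+1 == n then 0 else t.+1.
    move=> t ht; case: eqP => [->|ne]; [exact: modnn | apply: modn_small; lia].
  rewrite !m1 //; do 2 case: ifP => /eqP ?; lia.
have HN := imgc_nbhd e j HL.
set N := nbhd_in e L j in HN *.
have degH : forall k, k < n -> #|nbhd_in e L (f k)| = 2.
  move=> k hk.
  case: (posnP k) => [k0|k0].
    apply: (deg2 (k1 := n.-1) (k2 := 1) HL Hf); try lia.
    by move=> i hi; rewrite Ha ?inE; lia.
  case: (eqVneq k n.-1) => [kn|kn].
    apply: (deg2 (k1 := n.-2) (k2 := 0) HL Hf); try lia.
    by move=> i hi; rewrite Ha ?inE; lia.
  apply: (deg2 (k1 := k.-1) (k2 := k.+1) HL Hf); try lia.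
  by move=> i hi; rewrite Ha ?inE; lia.
case: (boolP [forall i : 'I_n, e j (f i)]) => [/forallP full | /forallPn [[m hm] /= Sm]].
  have full' : forall i, i < n -> e j (f i) by move=> i hi; exact: (full (Ordinal hi)).
  have NL : N = L.
    apply/setP => x; rewrite inE; apply/andb_idr => /HL [i [hi ->]]; exact: full' i hi.
  case: (ltngtP n 5) => [n5|n5|n5].
  - have n4 : n = 4 by lia.
    by do 3 right; left.
  - exfalso; apply: (claw_contra (a := j) (b := f 0) (c := f 2) (d := f 4) Hc);
      (apply: full'; lia) || (rewrite (feq Hf); lia) || (rewrite Ha; lia).
  - by do 6 right; left.
pose idx i := if m.+1 + i < n then m.+1 + i else m.+1 + i - n.
pose g i := f (idx i).
pose n' := n.-1.
have idxP : forall i, (m.+1 + i < n /\ idx i = m.+1 + i) \/ (n <= m.+1 + i /\ idx i = m.+1 + i - n).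
  by move=> i; rewrite /idx; case: ifP; lia.
have idxlt : forall i, i < n' -> idx i < n by move=> i hi; have := idxP i; lia.
have Hg : finj g n'.
  move=> i k hi hk E; have := Hf _ _ (idxlt i hi) (idxlt k hk) E.
  have := idxP i; have := idxP k; lia.
have Hpg : padj e g n'.
  move=> i k hi hk; rewrite /g Ha ?idxlt //; have := idxP i; have := idxP k; lia.
have Hjg : forall i, i < n' -> g i != j by move=> i hi; apply: Hj; exact: idxlt.
have Ng : imgc g n' (fun i => e j (g i)) N.
  move=> x; split.
    move/HN => [k [hk [Sk ->]]].
    have km : k != m by apply/eqP => E; move: Sm; rewrite -E Sk.
    have [i [hi ik]] : exists i, i < n' /\ idx i = k.
      case: (ltngtP m k) => h.
      - by exists (k - m.+1); have := idxP (k - m.+1); lia.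
      - by exists (k + n - m.+1); have := idxP (k + n - m.+1); lia.
      - by move: km; rewrite h eqxx.
    by exists i; rewrite /g ik.
  move=> [i [hi [Si ->]]]; apply/HN; exists (idx i); split; first exact: idxlt.
  by split.
have gL : forall i, i < n' -> g i \in L by move=> i hi; apply/HL; exists (idx i); split => //; exact: idxlt.
have E0 : e j (g 0) -> e j (g 1).
  move=> S0; case S1: (e j (g 1)) => //; exfalso.
  apply: (claw_contra (a := g 0) (b := j) (c := g 1) (d := f m) Hc).
  - by rewrite Hs.
  - rewrite Hpg; lia.
  - rewrite /g Ha ?idxlt; try lia; have := idxP 0; lia.
  - rewrite eq_sym Hjg; lia.
  - by rewrite eq_sym Hj.
  - rewrite /g (feq Hf) ?idxlt; try lia; have := idxP 1; lia.
  - by rewrite S1.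
  - by [].
  - rewrite /g Ha ?idxlt; try lia; have := idxP 1; lia.
have E1 : e j (g n'.-1) -> e j (g n'.-2).
  move=> S0; case S1: (e j (g n'.-2)) => //; exfalso.
  apply: (claw_contra (a := g n'.-1) (b := j) (c := g n'.-2) (d := f m) Hc).
  - by rewrite Hs.
  - rewrite Hpg; lia.
  - rewrite /g Ha ?idxlt; try lia; have := idxP n'.-1; lia.
  - rewrite eq_sym Hjg; lia.
  - by rewrite eq_sym Hj.
  - rewrite /g (feq Hf) ?idxlt; try lia; have := idxP n'.-2; lia.
  - by rewrite S1.
  - by [].
  - rewrite /g Ha ?idxlt; try lia; have := idxP n'.-2; lia.
case: (core (Tclaw (j := j) Hc Hg Hpg) (Iclaw Hc Hs Hg Hpg Hjg)).
  by move=> Hn; left; exact: cC0 Ng Hn.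
case.
  move=> [a [an [a01 Ha']]]; exfalso.
  case: a01 => ea.
    have S0 : e j (g 0) by apply/(Ha' 0); lia.
    have := E0 S0; move/(Ha' 1); lia.
  have S0 : e j (g n'.-1) by apply/(Ha' n'.-1); lia.
  have := E1 S0; move/(Ha' n'.-2); lia.
case.
  by move=> [a [an Ha']]; right; left; exact: cC2 Ng Hg Hpg an Ha'.
case.
  move=> [a [an Ha']].
  do 5 right; left.
  have [N3 NP] := cC3 Ng Hg Hpg an Ha'.
  split=> //; split=> // y /Ng [k [hk [Sk ->]]]; apply: degH; exact: idxlt.
case.
  move=> [a [an Ha']]; have [N4 NP] := cC4 Ng Hg Hpg an Ha'.
  by do 2 right; left; split => //; right.
case.
  move=> [a [c [ac [cn Ha']]]]; have [N4 NP] := cC5 Ng Hg Hpg ac cn Ha'.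
  by do 2 right; left; split => //; left.
case.
  move=> [n2 Ha']; exfalso.
  have S0 : e j (g 0) by apply/(Ha' 0); lia.
  have := E0 S0; move/(Ha' 1); lia.
case.
  move=> [a [an Ha']]; exfalso.
  have S0 : e j (g n'.-1) by apply/(Ha' n'.-1); lia.
  have := E1 S0; move/(Ha' n'.-2); lia.
move=> [c [c1 [cn Ha']]]; exfalso.
have S0 : e j (g 0) by apply/(Ha' 0); lia.
have := E0 S0; move/(Ha' 1); lia.
Qed.

Theorem lemma2 (T : finType) (e : rel T) (p : seq T) (j : T) :
  symmetric e -> irreflexive e -> claw_free e ->
  (induced_path e p \/ hole e p) ->
  j \notin p ->
  let L := [set x in p] in
  let N := nbhd_in e L j in
  (* (a.i) *)   N = set0
  (* (a.ii) *)  \/ (#|N| = 2 /\ exists a b, N = [set a; b] /\ e a b)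
  (* (a.iii) *) \/ (#|N| = 4 /\ (induces_2K2 e N \/ induces_path_edges e N 3))
  (* (a.iv) *)  \/ (hole e p /\ size p = 4 /\ N = L)
  (* (a.v) *)   \/ (induced_path e p /\ 2 <= size p /\ N = [set head j p; last j p])
  (* (b.i) *)   \/ (#|N| = 3 /\ induces_path_edges e N 2 /\
                    forall y, y \in N -> #|nbhd_in e L y| = 2)
  (* (b.ii) *)  \/ (hole e p /\ size p = 5 /\ N = L)
  (* (b.iii) *) \/ (induced_path e p /\ (N = [set head j p] \/ N = [set last j p]))
  (* (b.iv) *)  \/ (induced_path e p /\ exists ep x y,
                    (ep = head j p \/ ep = last j p) /\ x \in L /\ y \in L /\ e x y /\
                    #|N| = 3 /\ N = [set ep; x; y]).
Proof.
move=> Hs Hirr Hc [HP|HH] jp.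
  exact: (path_case Hs Hirr Hc HP jp).
exact: (hole_case Hs Hirr Hc HH jp).
Qed.
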